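(* There is a constant $C\ge1$ such that for every positive integer $n$ and all real $x>n_*$, $y>-n_*$, \[ C^{-1}B(x,y)\le q(x,y)\le C\,B(x,y),\qquad B(x,y)=\sqrt{\frac{x-n_*}{n_*+y}}\cdot\Big|\frac1{x-y}\log\frac{x+2n}{y+2n}\Big|, \] where $\frac1{x-y}\log\frac{x+2n}{y+2n}$ is given its continuous value $\frac1{x+2n}$ at $y=x$.
   Context: $n_*=n-\tfrac12$. For real $x>0$, $s<0$, $h^-_x(s)=\dfrac{\sqrt x}{\pi(x-s)\sqrt{-s}}$ (hitting density of the negative half-line for planar Brownian motion from $x$), and for $x<0$, $s>0$, $h^+_x(s)=h^-_{-x}(-s)=\dfrac{\sqrt{-x}}{\pi(s-x)\sqrt{s}}$. For real $x>n_*$, $y>-n_*$, $q(x,y)=\int_{-\infty}^{-n_*}h^-_{x-n_*}(u-n_* )\,h^+_{u+n_*}(y+n_* )\,du$. *)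

(* Defs.v *)
From Stdlib Require Import Reals Lra.
Open Scope R_scope.

Definition nstar (n : nat) : R := INR n - 1/2.

Definition hminus (x s : R) : R := sqrt x / (PI * (x - s) * sqrt (- s)).

(* h^+_x(s) = h^-_{-x}(-s) = sqrt(-x) / (pi (s - x) sqrt s),  x < 0, s > 0 *)
Definition hplus (x s : R) : R := hminus (- x) (- s).

Definition q_integrand (n : nat) (x y u : R) : R :=
  hminus (x - nstar n) (u - nstar n) * hplus (u + nstar n) (y + nstar n).

Definition improper_integral_to (f : R -> R) (a l : R) : Prop :=
  (forall M, M <= a -> inhabited (Riemann_integrable f M a)) /\
  (forall eps, 0 < eps -> exists M0, M0 <= a /\
     forall M (pr : Riemann_integrable f M a), M <= M0 ->
       Rabs (RiemannInt pr - l) < eps).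

Definition logquot (n : nat) (x y : R) : R :=
  if Req_EM_T x y then / (x + 2 * INR n)
  else ln ((x + 2 * INR n) / (y + 2 * INR n)) / (x - y).

Definition Bfun (n : nat) (x y : R) : R :=
  sqrt ((x - nstar n) / (nstar n + y)) * Rabs (logquot n x y).

(* Main.v *)
Require Import Defs.
From Stdlib Require Import Reals Lra Classical.
From Coquelicot Require Import Coquelicot.
Open Scope R_scope.

Definition Lf (p q : R) : R :=
  if Req_EM_T p q then / p else ln (p / q) / (p - q).

Lemma ln_le_sub1 z : 0 < z -> ln z <= z - 1.
Proof. intros Hz. pose proof (exp_ineq1_le (ln z)). rewrite exp_ln in H; lra. Qed.

Lemma Lf_sym p q : 0 < p -> 0 < q -> Lf p q = Lf q p.
Proof.
  intros Hp Hq. unfold Lf. destruct (Req_EM_T p q); destruct (Req_EM_T q p); subst; try lra.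
  replace (q/p) with (/ (p/q)) by (field; lra). rewrite ln_Rinv.
    + field. lra.
    + apply Rdiv_lt_0_compat; lra.
Qed.

Lemma Lf_gt_case p q : 0 < q -> q < p -> ln (p/q) / (p - q) = Lf p q.
Proof. intros. unfold Lf. destruct (Req_EM_T p q); [lra|reflexivity]. Qed.

Lemma Lf_pos_gt p q : 0 < q -> q < p -> 0 < Lf p q.
Proof.
  intros Hq Hpq. rewrite <- Lf_gt_case by lra. apply Rdiv_lt_0_compat; [|lra].
  rewrite <- ln_1. apply ln_increasing; [lra|].
  apply (Rmult_lt_reg_r q); [lra|]. field_simplify; lra.
Qed.

Lemma Lf_pos p q : 0 < p -> 0 < q -> 0 < Lf p q.
Proof.
  intros Hp Hq. destruct (Rtotal_order p q) as [H|[H|H]].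
  - rewrite Lf_sym by lra. apply Lf_pos_gt; lra.
  - subst. unfold Lf. destruct (Req_EM_T q q); [|lra]. apply Rinv_0_lt_compat; lra.
  - apply Lf_pos_gt; lra.
Qed.

Lemma Lf_le_gt p q m : 0 < m -> m <= q -> q < p -> Lf p q <= / m.
Proof.
  intros Hm Hmq Hpq. rewrite <- Lf_gt_case by lra.
  apply Rle_trans with (/q).
  - pose proof (ln_le_sub1 (p/q)) as H. assert (0 < p/q) by (apply Rdiv_lt_0_compat; lra).
    specialize (H H0). replace (/q) with ((p/q - 1)/(p-q)) by (field; lra).
    unfold Rdiv. apply Rmult_le_compat_r; [|lra]. left; apply Rinv_0_lt_compat; lra.
  - apply Rinv_le_contravar; lra.
Qed.

Lemma Lf_le p q m : 0 < m -> m <= p -> m <= q -> Lf p q <= / m.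
Proof.
  intros Hm Hmp Hmq. destruct (Rtotal_order p q) as [H|[H|H]].
  - rewrite Lf_sym by lra. apply Lf_le_gt; lra.
  - subst. unfold Lf. destruct (Req_EM_T q q); [|lra]. apply Rinv_le_contravar; lra.
  - apply Lf_le_gt; lra.
Qed.

Lemma Lf_ge_gt p q m : 0 < q -> q < p -> p <= m -> / m <= Lf p q.
Proof.
  intros Hq Hpq Hm. rewrite <- Lf_gt_case by lra.
  apply Rle_trans with (/p).
  - apply Rinv_le_contravar; lra.
  - pose proof (ln_le_sub1 (q/p)) as H. assert (0 < q/p) by (apply Rdiv_lt_0_compat; lra).
    specialize (H H0).
    replace (q/p) with (/ (p/q)) in H by (field; lra). rewrite ln_Rinv in H by (apply Rdiv_lt_0_compat; lra).
    replace (/p) with ((1 - q/p)/(p-q)) by (field; lra).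
    unfold Rdiv. apply Rmult_le_compat_r; [left; apply Rinv_0_lt_compat; lra|].
    replace (q * /p) with (/ (p/q)) by (field; lra). lra.
Qed.

Lemma Lf_ge p q m : 0 < p -> 0 < q -> p <= m -> q <= m -> / m <= Lf p q.
Proof.
  intros Hp Hq Hmp Hmq. destruct (Rtotal_order p q) as [H|[H|H]].
  - rewrite Lf_sym by lra. apply Lf_ge_gt; lra.
  - subst. unfold Lf. destruct (Req_EM_T q q); [|lra]. apply Rinv_le_contravar; lra.
  - apply Lf_ge_gt; lra.
Qed.

Lemma Lf_shift_eq r p q : 0 < r + p -> 0 < r + q -> p <> q ->
  Lf (r+p) (r+q) = (ln (r+p) - ln (r+q)) / (p - q).
Proof.
  intros. unfold Lf. destruct (Req_EM_T (r+p) (r+q)); [lra|].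
  rewrite ln_div by lra. f_equal. ring.
Qed.

Lemma KL b p q A B : 0 < p -> 0 < q -> A <= B -> 0 <= b - B ->
  is_RInt (fun u => / ((b - u + p) * (b - u + q))) A B
    (Lf (b - B + p) (b - B + q) - Lf (b - A + p) (b - A + q)).
Proof.
  intros Hp Hq HAB Hb.
  assert (Hr : forall u, Rmin A B <= u <= Rmax A B -> 0 < b - u + p /\ 0 < b - u + q).
  { intros u Hu. rewrite Rmin_left in Hu by lra. rewrite Rmax_right in Hu by lra. lra. }
  assert (Hc : forall u, Rmin A B <= u <= Rmax A B ->
     continuous (fun u => / ((b - u + p) * (b - u + q))) u).
  { intros u Hu. destruct (Hr u Hu).
    apply (ex_derive_continuous (K:=R_AbsRing) (V:=R_NormedModule)). auto_derive.
    apply Rgt_not_eq. apply Rmult_lt_0_compat; lra. }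
  destruct (Req_EM_T p q) as [E|E].
  - subst q.
    assert (H := is_RInt_derive (V:=R_CompleteNormedModule) (fun u => / (b - u + p))
               (fun u => / ((b - u + p) * (b - u + p))) A B).
    replace (Lf (b - B + p) (b - B + p) - Lf (b - A + p) (b - A + p))
      with (minus ((fun u => / (b - u + p)) B) ((fun u => / (b - u + p)) A)).
    2:{ unfold Lf. destruct (Req_EM_T (b-B+p) (b-B+p)); [|lra].
        destruct (Req_EM_T (b-A+p) (b-A+p)); [|lra]. reflexivity. }
    apply H; [|exact Hc].
    intros u Hu. destruct (Hr u Hu). auto_derive; [lra|]. field. lra.
  - assert (H := is_RInt_derive (V:=R_CompleteNormedModule)
        (fun u => (ln (b - u + p) - ln (b - u + q)) / (p - q))
               (fun u => / ((b - u + p) * (b - u + q))) A B).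
    replace (Lf (b - B + p) (b - B + q) - Lf (b - A + p) (b - A + q))
      with (minus ((fun u => (ln (b - u + p) - ln (b - u + q)) / (p - q)) B)
                  ((fun u => (ln (b - u + p) - ln (b - u + q)) / (p - q)) A)).
    2:{ rewrite !Lf_shift_eq; try lra. reflexivity. }
    apply H; [|exact Hc].
    intros u Hu. destruct (Hr u Hu). auto_derive; [lra|]. field. lra.
Qed.

Lemma KS b Y A B : 0 < Y -> A <= B -> 0 <= b - B ->
  is_RInt (fun u => / sqrt (b - u + Y)) A B (2 * sqrt (b - A + Y) - 2 * sqrt (b - B + Y)).
Proof.
  intros HY HAB Hb.
  assert (Hr : forall u, Rmin A B <= u <= Rmax A B -> 0 < b - u + Y).
  { intros u Hu. rewrite Rmin_left in Hu by lra. rewrite Rmax_right in Hu by lra. lra. }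
  assert (H := is_RInt_derive (V:=R_CompleteNormedModule)
        (fun u => - 2 * sqrt (b - u + Y)) (fun u => / sqrt (b - u + Y)) A B).
  replace (2 * sqrt (b - A + Y) - 2 * sqrt (b - B + Y))
    with (minus ((fun u => - 2 * sqrt (b - u + Y)) B) ((fun u => - 2 * sqrt (b - u + Y)) A))
    by (unfold minus, plus, opp; simpl; ring).
  apply H.
  - intros u Hu. pose proof (Hr u Hu). auto_derive; [lra|].
    pose proof (sqrt_lt_R0 _ H0). replace (b + - u + Y) with (b - u + Y) by ring. field. lra.
  - intros u Hu. pose proof (Hr u Hu). apply (ex_derive_continuous (K:=R_AbsRing) (V:=R_NormedModule)). auto_derive.
    split; [lra|]. split; [|exact I]. apply Rgt_not_eq, sqrt_lt_R0. lra.
Qed.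

Lemma cmul (f g : R -> R) x : continuous f x -> continuous g x -> continuous (fun y => f y * g y) x.
Proof. apply (continuous_mult (K:=R_AbsRing)). Qed.
Lemma csqrt (f : R -> R) x : continuous f x -> continuous (fun y => sqrt (f y)) x.
Proof. apply continuous_sqrt_comp. Qed.
Lemma cder (f : R -> R) x : ex_derive f x -> continuous f x.
Proof. apply (ex_derive_continuous (K:=R_AbsRing) (V:=R_NormedModule)). Qed.

Definition fq a x y u := hminus (x - a) (u - a) * hplus (u + a) (y + a).

Lemma fq_cont a x y z : 0 < a -> a < x -> -a < y -> z <= -a -> continuous (fq a x y) z.
Proof.
  intros Ha Hx Hy Hz. pose proof PI_RGT_0.
  apply (cmul (fun u => hminus (x-a) (u-a)) (fun u => hplus (u+a) (y+a))).
  - apply cder. unfold hminus. auto_derive. repeat split; try lra.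
    apply Rgt_not_eq. apply Rmult_lt_0_compat; [apply Rmult_lt_0_compat; lra|].
    apply sqrt_lt_R0; lra.
  - unfold hplus, hminus, Rdiv.
    apply (cmul (fun u => sqrt (- (u + a))) (fun u => / (PI * (-(u+a) - -(y+a)) * sqrt (- - (y+a))))).
    + apply csqrt. apply cder. auto_derive. exact I.
    + apply cder. auto_derive. 
      apply Rgt_not_eq. apply Rmult_lt_0_compat; [apply Rmult_lt_0_compat; lra|].
      apply sqrt_lt_R0; lra.
Qed.

Lemma fq_eq a x y u : 0 < a -> a < x -> -a < y -> u <= -a ->
  fq a x y u = sqrt ((x-a)/(a+y)) / (PI*PI) * (sqrt (-a-u) / sqrt (a-u)) / ((x-u)*(y-u)).
Proof.
  intros Ha Hx Hy Hu. pose proof PI_RGT_0.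
  assert (0 < sqrt (a-u)) by (apply sqrt_lt_R0; lra).
  assert (0 < sqrt (a+y)) by (apply sqrt_lt_R0; lra).
  unfold fq, hplus, hminus. rewrite sqrt_div_alt by lra.
  replace (x - a - (u - a)) with (x - u) by ring.
  replace (- (u - a)) with (a - u) by ring.
  replace (- (u + a)) with (-a - u) by ring.
  replace (-a - u - - (y + a)) with (y - u) by ring.
  replace (- - (y + a)) with (a + y) by ring.
  field. repeat split; lra.
Qed.

Lemma frac_le a b c d : 0 < b -> 0 < d -> a * d <= c * b -> a / b <= c / d.
Proof.
  intros Hb Hd H. apply (Rmult_le_reg_r (b*d)); [nra|].
  replace (a / b * (b * d)) with (a * d) by (field; lra).
  replace (c / d * (b * d)) with (c * b) by (field; lra). exact H.
Qed.

Section S.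
Variables a x y : R.
Hypothesis Ha : 1/2 <= a.
Hypothesis Hx : a < x.
Hypothesis Hy : -a < y.
Let K := sqrt ((x-a)/(a+y)) / (PI*PI).

Lemma K_nonneg : 0 <= K.
Proof. unfold K. pose proof PI_RGT_0. apply Rmult_le_pos; [apply sqrt_pos|].
  left; apply Rinv_0_lt_compat; nra. Qed.

Lemma fq_nonneg u : u <= -a -> 0 <= fq a x y u.
Proof.
  intros Hu. rewrite fq_eq by lra. fold K. pose proof K_nonneg.
  assert (0 < sqrt (a-u)) by (apply sqrt_lt_R0; lra).
  pose proof (sqrt_pos (-a-u)).
  unfold Rdiv. apply Rmult_le_pos; [apply Rmult_le_pos; auto|].
  - apply Rmult_le_pos; auto. left; apply Rinv_0_lt_compat; auto.
  - left; apply Rinv_0_lt_compat; nra.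
Qed.

Lemma fq_lower u : u <= -3*a ->
  K / 8 * / ((-3*a - u + (x+2*a+1)) * (-3*a - u + (y+2*a+1))) <= fq a x y u.
Proof.
  intros Hu. rewrite fq_eq by lra. fold K. pose proof K_nonneg.
  assert (0 < sqrt (a-u)) by (apply sqrt_lt_R0; lra).
  assert (0 < sqrt (-a-u)) by (apply sqrt_lt_R0; lra).
  assert (sqrt (a-u) <= 2 * sqrt (-a-u)).
  { apply Rsqr_incr_0_var; [|nra]. unfold Rsqr.
    replace (2 * sqrt (-a-u) * (2 * sqrt (-a-u))) with (4 * (sqrt (-a-u) * sqrt (-a-u))) by ring.
    rewrite !sqrt_sqrt; lra. }
  set (E := (-3*a - u + (x+2*a+1)) * (-3*a - u + (y+2*a+1))).
  assert (0 < E) by (unfold E; nra).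
  replace (K / 8 * / E) with (K * (1 / (8 * E))) by (field; lra).
  replace (K * (sqrt (-a-u) / sqrt (a-u)) / ((x-u)*(y-u))) with (K * (sqrt (-a-u) / (sqrt (a-u) * ((x-u)*(y-u))))) by (field; repeat split; lra).
  apply Rmult_le_compat_l; auto.
  assert (0 < x - u) by lra. assert (0 < y - u) by lra.
  apply frac_le; [lra|apply Rmult_lt_0_compat; [lra|apply Rmult_lt_0_compat; lra]|]. unfold E in *.
  assert (x - u <= 2 * (-3*a - u + (x+2*a+1))) by lra.
  assert (y - u <= 2 * (-3*a - u + (y+2*a+1))) by lra.
  assert ((x-u)*(y-u) <= 4 * ((-3*a - u + (x+2*a+1)) * (-3*a - u + (y+2*a+1)))) by nra.
  assert (sqrt (a-u) * ((x-u)*(y-u)) <= 2 * sqrt (-a-u) * (4 * ((-3*a - u + (x+2*a+1)) * (-3*a - u + (y+2*a+1))))).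
  { apply Rmult_le_compat; nra. }
  nra.
Qed.

Lemma fq_upper_tail u : u <= -3*a ->
  fq a x y u <= 9 * K * / ((-3*a - u + (x+2*a+1)) * (-3*a - u + (y+2*a+1))).
Proof.
  intros Hu. rewrite fq_eq by lra. fold K. pose proof K_nonneg.
  assert (0 < sqrt (a-u)) by (apply sqrt_lt_R0; lra).
  pose proof (sqrt_pos (-a-u)).
  assert (sqrt (-a-u) <= sqrt (a-u)) by (apply sqrt_le_1_alt; lra).
  set (E := (-3*a - u + (x+2*a+1)) * (-3*a - u + (y+2*a+1))).
  assert (0 < E) by (unfold E; nra).
  assert (0 < x - u) by lra. assert (0 < y - u) by lra.
  replace (9 * K * / E) with (K * (9 / E)) by (field; lra).
  replace (K * (sqrt (-a-u) / sqrt (a-u)) / ((x-u)*(y-u))) with (K * (sqrt (-a-u) / (sqrt (a-u) * ((x-u)*(y-u))))) by (field; repeat split; lra).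
  apply Rmult_le_compat_l; auto.
  apply frac_le; [apply Rmult_lt_0_compat; [lra|apply Rmult_lt_0_compat; lra]|lra|]. unfold E in *.
  assert (-3*a - u + (x+2*a+1) <= 3 * (x - u)) by lra.
  assert (-3*a - u + (y+2*a+1) <= 3 * (y - u)) by lra.
  assert ((-3*a - u + (x+2*a+1)) * (-3*a - u + (y+2*a+1)) <= 9 * ((x-u)*(y-u))) by nra.
  assert (sqrt (-a-u) * ((-3*a - u + (x+2*a+1)) * (-3*a - u + (y+2*a+1))) <= sqrt (a-u) * (9 * ((x-u)*(y-u)))).
  { apply Rmult_le_compat; nra. }
  nra.
Qed.

Lemma fq_upper_mid1 u : -3*a <= u -> u <= -a -> 2*a <= y + a ->
  fq a x y u <= K * / ((x+a)*(y+a)).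
Proof.
  intros Hu1 Hu Hya. rewrite fq_eq by lra. fold K. pose proof K_nonneg.
  assert (0 < sqrt (a-u)) by (apply sqrt_lt_R0; lra).
  pose proof (sqrt_pos (-a-u)).
  assert (sqrt (-a-u) <= sqrt (a-u)) by (apply sqrt_le_1_alt; lra).
  assert (0 < x - u) by lra. assert (0 < y - u) by lra.
  replace (K * / ((x+a)*(y+a))) with (K * (1 / ((x+a)*(y+a)))) by (field; lra).
  replace (K * (sqrt (-a-u) / sqrt (a-u)) / ((x-u)*(y-u))) with (K * (sqrt (-a-u) / (sqrt (a-u) * ((x-u)*(y-u))))) by (field; repeat split; lra).
  apply Rmult_le_compat_l; auto.
  apply frac_le; [apply Rmult_lt_0_compat; [lra|apply Rmult_lt_0_compat; lra]|nra|].
  assert ((x+a)*(y+a) <= (x-u)*(y-u)) by nra.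
  assert (sqrt (-a-u) * ((x+a)*(y+a)) <= sqrt (a-u) * ((x-u)*(y-u))).
  { apply Rmult_le_compat; nra. }
  nra.
Qed.

Lemma fq_upper_mid2 u : -3*a <= u -> u <= -a ->
  fq a x y u <= K / (sqrt (2*a) * (x+a)) * / sqrt (-a - u + (y+a)).
Proof.
  intros Hu1 Hu. rewrite fq_eq by lra. fold K. pose proof K_nonneg.
  replace (-a - u + (y+a)) with (y - u) by ring.
  assert (0 < sqrt (a-u)) by (apply sqrt_lt_R0; lra).
  assert (0 < sqrt (2*a)) by (apply sqrt_lt_R0; lra).
  assert (0 < sqrt (y-u)) by (apply sqrt_lt_R0; lra).
  pose proof (sqrt_pos (-a-u)).
  assert (sqrt (-a-u) <= sqrt (y-u)) by (apply sqrt_le_1_alt; lra).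
  assert (sqrt (2*a) <= sqrt (a-u)) by (apply sqrt_le_1_alt; lra).
  assert (0 < x - u) by lra. assert (0 < y - u) by lra.
  replace (K / (sqrt (2*a) * (x+a)) * / sqrt (y - u)) with (K * (1 / (sqrt (2*a) * (x+a) * sqrt (y-u)))) by (field; repeat split; lra).
  replace (K * (sqrt (-a-u) / sqrt (a-u)) / ((x-u)*(y-u))) with (K * (sqrt (-a-u) / (sqrt (a-u) * ((x-u)*(y-u))))) by (field; repeat split; lra).
  apply Rmult_le_compat_l; auto.
  apply frac_le; [apply Rmult_lt_0_compat; [lra|apply Rmult_lt_0_compat; lra]|apply Rmult_lt_0_compat; [apply Rmult_lt_0_compat; lra|lra]|].
  rewrite <- (sqrt_sqrt (y-u)) at 2 by lra.
  assert (sqrt (2*a) * (x+a) <= sqrt (a-u) * (x-u)) by (apply Rmult_le_compat; lra).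
  assert (sqrt (-a-u) * sqrt (y-u) <= sqrt (y-u) * sqrt (y-u)) by (apply Rmult_le_compat; lra).
  assert (0 <= sqrt (2*a) * (x+a)) by nra.
  assert (0 <= sqrt (-a-u) * sqrt (y-u)) by nra.
  assert ((sqrt (-a-u) * sqrt (y-u)) * (sqrt (2*a) * (x+a)) <= (sqrt (y-u) * sqrt (y-u)) * (sqrt (a-u) * (x-u))) by (apply Rmult_le_compat; lra).
  nra.
Qed.
End S.

Lemma mono (f : R -> R) b :
  (forall M1 M2, M1 <= M2 -> M2 <= b -> ex_RInt f M1 M2) ->
  (forall u, u <= b -> 0 <= f u) ->
  forall M1 M2, M1 <= M2 -> M2 <= b -> RInt f M2 b <= RInt f M1 b.
Proof.
  intros Hex Hpos M1 M2 H1 H2.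
  rewrite <- (RInt_Chasles f M1 M2 b) by (apply Hex; lra).
  assert (0 <= RInt f M1 M2).
  { apply RInt_ge_0; auto. intros; apply Hpos; lra. }
  unfold plus; simpl. lra.
Qed.

Lemma improper_from_bound (f : R -> R) (b S : R) :
  (forall M1 M2, M1 <= M2 -> M2 <= b -> ex_RInt f M1 M2) ->
  (forall u, u <= b -> 0 <= f u) ->
  (forall M, M <= b -> RInt f M b <= S) ->
  exists l, improper_integral_to f b l /\ l <= S /\ (forall M, M <= b -> RInt f M b <= l).
Proof.
  intros Hex Hpos HS.
  set (E := fun v => exists M, M <= b /\ v = RInt f M b).
  assert (Hb : bound E) by (exists S; intros v [M [HM ->]]; auto).
  assert (Hne : exists v, E v) by (exists (RInt f b b); exists b; split; [lra|auto]).
  destruct (completeness E Hb Hne) as [l [Hup Hlub]].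
  exists l. split; [|split].
  - split.
    + intros M HM. constructor. apply ex_RInt_Reals_0. apply Hex; lra.
    + intros eps Heps.
      assert (exists M0, M0 <= b /\ l - eps < RInt f M0 b).
      { apply NNPP. intro Hn.
        assert (is_upper_bound E (l - eps)).
        { intros v [M [HM ->]]. apply Rnot_lt_le. intro Hc. apply Hn. exists M; auto. }
        specialize (Hlub _ H). lra. }
      destruct H as [M0 [HM0 Hlt]]. exists M0. split; auto.
      intros M pr HM. rewrite <- RInt_Reals.
      assert (RInt f M0 b <= RInt f M b) by (apply (mono f b Hex Hpos); lra).
      assert (RInt f M b <= l) by (apply Hup; exists M; split; [lra|auto]).
      apply Rabs_def1; lra.
  - apply Hlub. intros v [M [HM ->]]. auto.
  - intros M HM. apply Hup. exists M; auto.
Qed.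

Lemma logquot_Lf n x y : logquot n x y = Lf (x + 2 * INR n) (y + 2 * INR n).
Proof.
  unfold logquot, Lf.
  destruct (Req_EM_T x y); destruct (Req_EM_T (x + 2 * INR n) (y + 2 * INR n)); try lra.

  replace (x + 2 * INR n - (y + 2 * INR n)) with (x - y) by ring. reflexivity.
Qed.

Theorem mainTheorem12 :
  exists C : R, 1 <= C /\
    forall (n : nat) (x y : R), (1 <= n)%nat ->
      nstar n < x -> - nstar n < y ->
      exists q : R,
        improper_integral_to (q_integrand n x y) (- nstar n) q /\
        / C * Bfun n x y <= q /\ q <= C * Bfun n x y.
Proof.
  pose proof PI2_3_2 as Hpi.
  exists (16*PI*PI). split; [nra|].
  intros n x y Hn Hx Hy.
  assert (Ha : 1/2 <= nstar n) by (unfold nstar; apply le_INR in Hn; simpl in Hn; lra).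
  assert (H2n : 2 * INR n = 2 * nstar n + 1) by (unfold nstar; lra).
  unfold Bfun. rewrite logquot_Lf, H2n.
  change (q_integrand n x y) with (fq (nstar n) x y).
  set (a := nstar n) in *. clearbody a.
  set (f := fq a x y).
  assert (Hex : forall M1 M2, M1 <= M2 -> M2 <= -a -> ex_RInt f M1 M2).
  { intros M1 M2 H1 H2. apply (ex_RInt_continuous (V:=R_CompleteNormedModule)). intros z Hz.
    rewrite Rmin_left, Rmax_right in Hz by lra. apply fq_cont; lra. }
  assert (Hpos : forall u, u <= -a -> 0 <= f u) by (intros; apply fq_nonneg; lra).
  set (K := sqrt ((x-a)/(a+y)) / (PI*PI)).
  assert (HK : 0 <= K) by (apply K_nonneg; lra).
  set (L := Lf (x + (2*a+1)) (y + (2*a+1))).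
  assert (HL : 0 < L) by (apply Lf_pos; lra).
  assert (Htail : forall M, M <= -3*a ->
     K / 8 * (L - Lf (-3*a - M + (x+2*a+1)) (-3*a - M + (y+2*a+1))) <= RInt f M (-3*a) /\
     RInt f M (-3*a) <= 9 * K * (L - Lf (-3*a - M + (x+2*a+1)) (-3*a - M + (y+2*a+1)))).
  { intros M HM.
    assert (Hg := KL (-3*a) (x+2*a+1) (y+2*a+1) M (-3*a) ltac:(lra) ltac:(lra) HM ltac:(lra)).
    replace (-3*a - -3*a + (x+2*a+1)) with (x + (2*a+1)) in Hg by ring.
    replace (-3*a - -3*a + (y+2*a+1)) with (y + (2*a+1)) in Hg by ring.
    fold L in Hg.
    set (v := L - Lf (-3*a - M + (x+2*a+1)) (-3*a - M + (y+2*a+1))) in *.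
    set (g := fun u => / ((-3 * a - u + (x + 2 * a + 1)) * (-3 * a - u + (y + 2 * a + 1)))) in *.
    assert (H9 := is_RInt_scal g M (-3*a) (9*K) v Hg).
    assert (H8 := is_RInt_scal g M (-3*a) (K/8) v Hg).
    split.
    - replace (K / 8 * v) with (RInt (fun u => K/8 * g u) M (-3*a)).
      2:{ apply is_RInt_unique. exact H8. }
      apply RInt_le; [exact HM| exists (scal (K/8) v); exact H8 | apply Hex; lra |].
      intros u Hu. unfold g. apply fq_lower; lra.
    - replace (9 * K * v) with (RInt (fun u => 9*K * g u) M (-3*a)).
      2:{ apply is_RInt_unique. exact H9. }
      apply RInt_le; [exact HM| apply Hex; lra | exists (scal (9*K) v); exact H9 |].
      intros u Hu. unfold g. apply fq_upper_tail; lra. }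
  assert (Hmid : RInt f (-3*a) (-a) <= 10 * K * L).
  { destruct (Rle_lt_dec (2*a) (y+a)) as [Hya|Hya].
    - set (c0 := K * / ((x+a)*(y+a))).
      apply Rle_trans with (RInt (fun _ => c0) (-3*a) (-a)).
      + apply RInt_le; [lra| apply Hex; lra | apply ex_RInt_const |].
        intros u Hu. apply fq_upper_mid1; lra.
      + rewrite RInt_const. unfold scal; simpl; unfold mult; simpl.
        set (m := 5/2 * (y+a) * (x+a) / (2*a)).
        assert (Hm1 : 5/2 * (x+a) <= m).
        { unfold m. apply (Rmult_le_reg_r (2*a)); [lra|]. field_simplify; [|lra]. nra. }
        assert (Hm2 : 5/2 * (y+a) <= m).
        { unfold m. apply (Rmult_le_reg_r (2*a)); [lra|]. field_simplify; [|lra]. nra. }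
        assert (HLm : / m <= L) by (apply Lf_ge; lra).
        replace (( -a - -3*a) * c0) with (K * (5/2 * / m)) by (unfold c0, m; field; repeat split; lra).
        replace (10 * K * L) with (K * (10 * L)) by ring.
        apply Rmult_le_compat_l; auto.
        assert (0 < /m) by (apply Rinv_0_lt_compat; lra). lra.
    - set (c0 := K / (sqrt (2*a) * (x+a))).
      assert (Hs := KS (-a) (y+a) (-3*a) (-a) ltac:(lra) ltac:(lra) ltac:(lra)).
      assert (Hs2 := is_RInt_scal _ _ _ c0 _ Hs).
      apply Rle_trans with (RInt (fun u => c0 * / sqrt (-a - u + (y+a))) (-3*a) (-a)).
      + apply RInt_le; [lra| apply Hex; lra | eexists; exact Hs2 |].
        intros u Hu. apply fq_upper_mid2; lra.
      + replace (RInt (fun u => c0 * / sqrt (-a - u + (y+a))) (-3*a) (-a))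
          with (c0 * (2 * sqrt (-a - -3*a + (y+a)) - 2 * sqrt (-a - -a + (y+a)))).
        2:{ symmetry. apply is_RInt_unique. exact Hs2. }
        replace (-a - -3*a + (y+a)) with (y + 3*a) by ring.
        assert (Hs2a : 0 < sqrt (2*a)) by (apply sqrt_lt_R0; lra).
        assert (Hsq : sqrt (y + 3*a) <= 2 * sqrt (2*a)).
        { apply Rsqr_incr_0_var; [|lra]. unfold Rsqr.
          replace (2 * sqrt (2*a) * (2 * sqrt (2*a))) with (4 * (sqrt (2*a) * sqrt (2*a))) by ring.
          rewrite !sqrt_sqrt; lra. }
        pose proof (sqrt_pos (-a - -a + (y+a))).
        assert (HLm : / (5/2 * (x+a)) <= L) by (apply Lf_ge; lra).
        assert (Hc0 : 0 <= c0).
        { unfold c0. unfold Rdiv. apply Rmult_le_pos; auto. left; apply Rinv_0_lt_compat. nra. }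
        apply Rle_trans with (c0 * (4 * sqrt (2*a))).
        { apply Rmult_le_compat_l; auto. lra. }
        replace (c0 * (4 * sqrt (2*a))) with (K * (10 * / (5/2 * (x+a)))) by (unfold c0; field; lra).
        replace (10 * K * L) with (K * (10 * L)) by ring.
        apply Rmult_le_compat_l; auto. lra. }
  assert (Hup : forall M, M <= -a -> RInt f M (-a) <= 19 * K * L).
  { intros M HM.
    set (M' := Rmin M (-3*a)).
    assert (HM' : M' <= -3*a) by apply Rmin_r.
    apply Rle_trans with (RInt f M' (-a)).
    { apply (mono f (-a) Hex Hpos); [apply Rmin_l|lra]. }
    rewrite <- (RInt_Chasles f M' (-3*a) (-a)) by (apply Hex; lra).
    unfold plus; simpl.
    destruct (Htail M' HM') as [_ Ht].
    assert (0 < Lf (-3 * a - M' + (x + 2 * a + 1)) (-3 * a - M' + (y + 2 * a + 1))) by (apply Lf_pos; lra).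
    assert (9*K*Lf (-3 * a - M' + (x + 2 * a + 1)) (-3 * a - M' + (y + 2 * a + 1)) >= 0) by nra.
    nra. }
  destruct (improper_from_bound f (-a) (19*K*L) Hex Hpos Hup) as [l [Himp [Hl1 Hl2]]].
  exists l. split; [exact Himp|].
  set (V := 2 / L + 1).
  assert (HV : 0 < V) by (unfold V; assert (0 < 2/L) by (apply Rdiv_lt_0_compat; lra); lra).
  assert (Hlow : K * L / 16 <= l).
  { apply Rle_trans with (RInt f (-3*a - V) (-a)); [|apply Hl2; lra].
    rewrite <- (RInt_Chasles f (-3*a - V) (-3*a) (-a)) by (apply Hex; lra).
    unfold plus; simpl.
    assert (0 <= RInt f (-3*a) (-a)) by (apply RInt_ge_0; [lra|apply Hex; lra|intros; apply Hpos; lra]).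
    destruct (Htail (-3*a - V) ltac:(lra)) as [Ht _].
    replace (-3*a - (-3*a - V) + (x+2*a+1)) with (V + (x+2*a+1)) in Ht by ring.
    replace (-3*a - (-3*a - V) + (y+2*a+1)) with (V + (y+2*a+1)) in Ht by ring.
    assert (Hlf : Lf (V + (x+2*a+1)) (V + (y+2*a+1)) <= / V) by (apply Lf_le; lra).
    assert (HVi : / V <= L / 2).
    { replace (L/2) with (/ (2/L)) by (field; lra).
      apply Rinv_le_contravar; [apply Rdiv_lt_0_compat; lra | unfold V; lra]. }
    assert (K/8 * (L/2) <= K/8 * (L - Lf (V + (x+2*a+1)) (V + (y+2*a+1)))).
    { apply Rmult_le_compat_l; lra. }
    lra. }
  rewrite Rabs_pos_eq by lra.
  replace (x + (2 * a + 1)) with (x + (2*a+1)) by ring. fold L.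
  assert (HB : sqrt ((x - a) / (a + y)) * L = PI * PI * (K * L)) by (unfold K; field; lra).
  rewrite HB. split.
  - replace (/ (16 * PI * PI) * (PI * PI * (K * L))) with (K * L / 16) by (field; lra). exact Hlow.
  - assert (0 <= K * L) by nra.
    apply Rle_trans with (19 * K * L); [exact Hl1|].
    assert (PI * PI >= 9) by nra.
    assert (16 * PI * PI * (PI * PI) >= 19) by nra.
    nra.
Qed.
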